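(* Let $h\in C[0,1]$, $c\in\mathbb R$, and let $q\in C[0,1]$ with $q>0$ on $(0,1)$. If $z\in C^1(0,1)$ satisfies $\dot z(\varphi)=h(\varphi)-c-q(\varphi)/z(\varphi)$ and $z(\varphi)<0$ for all $\varphi\in(0,1)$, then the limits $z(0^+)$ and $z(1^-)$ exist and are finite (and lie in $(-\infty,0]$), so $z$ extends continuously to $[0,1]$. *)

(* Defs.v *)
From HB Require Import structures.
From mathcomp Require Import all_boot all_order all_algebra.
From mathcomp Require Import all_classical all_reals all_analysis.
Set Implicit Arguments.
Unset Strict Implicit.
Unset Printing Implicit Defensive.

(* Main.v *)
From HB Require Import structures.
From mathcomp Require Import all_boot all_order all_algebra.
From mathcomp Require Import all_classical all_reals all_analysis.
From mathcomp Require Import ring lra.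
Import Order.TTheory GRing.Theory Num.Theory.
Import numFieldNormedType.Exports.
Local Open Scope classical_set_scope.
Local Open Scope ring_scope.
Lemma t (R : realType) (k x : R) : is_derive x 1 (fun t : R => k * t) k.
Proof. have := is_deriveZ k (is_derive_id x 1). by rewrite [X in is_derive _ _ _ X]/GRing.scale/= mulr1. Qed.
Lemma t2 (R : realType) (z : R -> R) (a A x : R) : is_derive x 1 z a -> is_derive x 1 (fun t => z t + A * t) (a + A).
Proof. move=> H. have := is_deriveD H (t _ A x). exact. Qed.
Lemma t3 (R : realType) (z : R -> R) (a k x : R) : is_derive x 1 z a -> is_derive x 1 (fun t => (1 + z t ^+ 2) * expR (k * t)) ((1 + z x ^+ 2) * (expR (k * x) * k) + expR (k * x) * (2 * z x * a)).
Proof. move=> H.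
have He : is_derive x 1 (expR \o (fun t => k * t)) (expR (k * x) * k).
  by have := is_derive1_comp (is_derive_expR (k * x)) (t _ k x); exact.
have H2 := is_deriveX 2 H.
have H3 : is_derive x 1 (fun t => 1 + z t ^+ 2) (0 + (2%:R * z x ^+ 1) *: a) by have := is_deriveD (is_derive_cst (1:R) x 1) H2; exact.
have := is_deriveM H3 He.
rewrite add0r /GRing.scale /= expr1. move=> H4. apply: is_derive_eq H4 _. 
rewrite mulrC; congr (_ + _); rewrite mulrC //.
Qed.
Lemma ndecr01 (R : realType) (f : R -> R) :
  (forall x : R, x \in `]0,1[ -> is_derive x 1 f (derive1 f x)) ->
  (forall x : R, x \in `]0,1[ -> 0 <= derive1 f x) ->
  forall x y : R, x \in `]0,1[ -> y \in `]0,1[ -> x <= y -> f x <= f y.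
Proof.
move=> df d0 x y x01 y01 xy.
have sub : forall t, x <= t -> t <= y -> t \in `]0,1[.
  move=> t xt ty; move: x01 y01; rewrite !in_itv/= => /andP[x0 _] /andP[_ y1].
  by rewrite (lt_le_trans x0 xt) (le_lt_trans ty y1).
apply: (@ger0_derive1_ndecr _ f x y) => //.
- by move=> t; rewrite in_itv/= => /andP[xt ty]; have [] := df t (sub t (ltW xt) (ltW ty)).
- by move=> t; rewrite in_itv/= => /andP[xt ty]; apply: d0; exact: sub (ltW xt) (ltW ty).
- apply: derivable_within_continuous => t; rewrite in_itv/= => /andP[xt ty].
  by have [] := df t (sub t xt ty).
Qed.
Theorem lemma3p1 (R : realType) (h q z : R -> R) (c : R) :
  {within `[0, 1], continuous h} ->
  {within `[0, 1], continuous q} ->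
  (forall x : R, x \in `]0, 1[ -> 0 < q x) ->
  (forall x : R, x \in `]0, 1[ -> derivable z x 1) ->
  {in `]0, 1[, continuous (derive1 z)} ->
  (forall x : R, x \in `]0, 1[ -> (derive1 z) x = h x - c - q x / z x) ->
  (forall x : R, x \in `]0, 1[ -> z x < 0) ->
  exists l0 l1 : R,
    [/\ l0 <= 0, l1 <= 0,
        z x @[x --> 0^'+] --> l0 &
        z x @[x --> 1^'-] --> l1].
Proof.
move=> ch cq qpos dz _ zeq zneg.
have le01 : (0:R) <= 1 by [].
have oc (t : R) : t \in `]0, 1[ -> t \in `[0, 1].
  by rewrite !in_itv/= => /andP[t0 t1]; rewrite !ltW.
have [cM _ hM] := EVT_max le01 ch.
have [cm _ hm] := EVT_min le01 ch.
have [cQ _ qM] := EVT_max le01 cq.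
pose A : R := `|h cM - c| + `|h cm - c|.
have A0 : 0 <= A by rewrite addr_ge0.
have hA (t : R) : t \in `]0, 1[ -> - A <= h t - c /\ h t - c <= A.
  move=> /oc t01; have := hM t t01; have := hm t t01.
  have := ler_norm (h cM - c); have := ler_norm (- (h cm - c)); rewrite normrN.
  have := normr_ge0 (h cM - c); have := normr_ge0 (h cm - c).
  rewrite /A; move=> *; split; lra.
have half : (2:R)^-1 \in `]0, 1[.
  by rewrite in_itv/= invr_gt0 ltr0n /= invf_lt1 ?ltr0n // ltr1n.
pose Q := q cQ.
have Q0 : 0 < Q.
  by apply: (lt_le_trans (qpos _ half)); apply: qM; exact: oc.
have qQ (t : R) : t \in `]0, 1[ -> q t <= Q by move=> /oc; exact: qM.
have Dz (x : R) : x \in `]0, 1[ -> is_derive x 1 z (derive1 z x).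
  by move=> x01; rewrite derive1E; exact: derivableP (dz x x01).
have qz (x : R) : x \in `]0, 1[ -> q x / z x < 0.
  move=> x01; rewrite pmulr_rlt0 ?qpos // invr_lt0; exact: zneg.
pose g := fun t : R => z t + A * t.
have Dg (x : R) : x \in `]0, 1[ -> is_derive x 1 g (derive1 g x).
  move=> x01; have H := @t2 _ z _ A x (Dz x x01).
  by rewrite derive1E derive_val.
have g'ge0 (x : R) : x \in `]0, 1[ -> 0 <= derive1 g x.
  move=> x01; have H := @t2 _ z _ A x (Dz x x01).
  rewrite derive1E derive_val zeq //.
  have := hA x x01; have := qz x x01; move=> *; lra.
have gnd := @ndecr01 _ g Dg g'ge0.
pose k := A + 2 * Q.
pose phi := fun t : R => (1 + z t ^+ 2) * expR (k * t).
have Dphi (x : R) : x \in `]0, 1[ -> is_derive x 1 phi (derive1 phi x).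
  move=> x01; have H := @t3 _ z _ k x (Dz x x01).
  by rewrite derive1E derive_val.
have phi'ge0 (x : R) : x \in `]0, 1[ -> 0 <= derive1 phi x.
  move=> x01; have H := @t3 _ z _ k x (Dz x x01).
  rewrite derive1E derive_val zeq //.
  have e0 := expR_gt0 (k * x).
  have zx := zneg x x01.
  have [h1 h2] := hA x x01; have qx := qQ x x01; have qx0 := qpos x x01.
  have E : z x * (q x / z x) = q x.
    by rewrite mulrC divfK // lt_eqF.
  set e := expR (k * x).
  set w := q x / z x in E *.
  have -> : (1 + z x ^+ 2) * (e * k) + e * (2 * z x * (h x - c - w))
      = e * ((1 + z x ^+ 2) * k + 2 * z x * (h x - c - w)) by ring.
  apply: mulr_ge0; first exact: ltW.
  have -> : (1 + z x ^+ 2) * k + 2 * z x * (h x - c - w)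
      = (1 + z x ^+ 2) * k + 2 * (z x * (h x - c)) - 2 * q x.
    by rewrite -E; ring.
  have P1 : 0 <= A * (1 + z x) ^+ 2 by apply: mulr_ge0 => //; exact: sqr_ge0.
  have P2 : z x * A <= z x * (h x - c) by rewrite ler_wnM2l // ltW.
  have P3 : 0 <= Q * z x ^+ 2 by apply: mulr_ge0; [exact: ltW|exact: sqr_ge0].
  have -> : (1 + z x ^+ 2) * k = A * (1 + z x) ^+ 2 - 2 * (z x * A) + 2 * Q + 2 * (Q * z x ^+ 2).
    by rewrite /k; ring.
  lra.
have phind := @ndecr01 _ phi Dphi phi'ge0.
pose B := phi 2^-1.
have zlb (t : R) : 0 < t -> t <= 2^-1 -> - B <= z t.
  move=> t0 th.
  have t01 : t \in `]0, 1[.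
    rewrite in_itv/= t0 /=; apply: (le_lt_trans th).
    by move: half; rewrite in_itv/= => /andP[].
  have := phind t 2^-1 t01 half th.
  rewrite /B /phi.
  have e1 : 1 <= expR (k * t).
    apply: le_trans (expR_ge1Dx _); rewrite lerDl mulr_ge0 //; last exact: ltW.
    by rewrite /k addr_ge0 // mulr_ge0 // ltW.
  have P : 1 + z t ^+ 2 <= (1 + z t ^+ 2) * expR (k * t).
    by rewrite ler_peMr // addr_ge0 // sqr_ge0.
  have P4 : 0 <= (z t + 1) ^+ 2 by exact: sqr_ge0.
  move: P4; rewrite !expr2 => P4.
  move: P; rewrite !expr2 => P.
  move=> H; nra.
have hpos : (0:R) < 2^-1 by rewrite invr_gt0 ltr0n.
have cvg0 : cvg (g x @[x --> 0^'+]).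
  apply: nondecreasing_at_right_is_cvgr.
    near=> b => x y; rewrite !in_itv/= => /andP[x0 xb] /andP[y0 yb] xy.
    have b1 : b <= 1 by near: b; exact: nbhs_right_le.
    by apply: gnd => //; rewrite in_itv/= ?x0 ?y0 /=; apply: lt_le_trans b1.
  near=> b; exists (- B) => _ [y yb <-]; have : y \in `]0, b[ := yb; rewrite in_itv/= => {yb} /andP[y0 yb].
  have bh : b <= 2^-1 by near: b; exact: nbhs_right_le.
  have := zlb y y0 (ltW (lt_le_trans yb bh)).
  have : 0 <= A * y by rewrite mulr_ge0 // ltW.
  rewrite /g; lra.
have cvg1 : cvg (g x @[x --> 1^'-]).
  apply: nondecreasing_at_left_is_cvgr.
    near=> b => x y; rewrite !in_itv/= => /andP[bx x1] /andP[b_y y1] xy.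
    have b0 : 0 <= b by near: b; exact: nbhs_left_ge.
    by apply: gnd => //; rewrite in_itv/= ?x1 ?y1 andbT; apply: le_lt_trans b0 _.
  near=> b; exists A => _ [y yb <-]; have : y \in `]b, 1[ := yb; rewrite in_itv/= => /andP[b_y y1].
  have b0 : 0 <= b by near: b; exact: nbhs_left_ge.
  have y01 : y \in `]0, 1[ by rewrite in_itv/= y1 andbT; exact: le_lt_trans b0 _.
  have := zneg y y01.
  have : A * y <= A by rewrite ler_piMr // ltW.
  rewrite /g; lra.
have zE : z = (fun t => g t - A * t) by apply/funext => t; rewrite /g addrK.
have cA (F : set_system R) (FF : Filter F) (a : R) : (x : R) @[x --> F] --> a ->
    A * x @[x --> F] --> A * a.
  by move=> H; have := cvgM (cvg_cst A) H; exact.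
have H0 : z x @[x --> 0^'+] --> lim (g x @[x --> 0^'+]) - A * 0.
  rewrite zE; have := cvgB cvg0 (cA _ _ _ (cvg_at_right_filter (@cvg_id _ (nbhs (0:R))))).
  exact.
have H1 : z x @[x --> 1^'-] --> lim (g x @[x --> 1^'-]) - A * 1.
  rewrite zE; have := cvgB cvg1 (cA _ _ _ (cvg_at_left_filter (@cvg_id _ (nbhs (1:R))))).
  exact.
exists (lim (g x @[x --> 0^'+]) - A * 0), (lim (g x @[x --> 1^'-]) - A * 1); split => //.
- apply: (ler_cvg_to H0 (cvg_cst 0)); near=> x; apply/ltW/zneg.
  rewrite in_itv/=; apply/andP; split; near: x; [exact: nbhs_right_gt|exact: nbhs_right_lt].
- apply: (ler_cvg_to H1 (cvg_cst 0)); near=> x; apply/ltW/zneg.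
  rewrite in_itv/=; apply/andP; split; near: x; [exact: nbhs_left_gt|exact: nbhs_left_lt].
Unshelve. all: by end_near.
Qed.
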